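(* Let $\mathfrak s=\mathfrak{osp}(1|2)$ with even generators $\mathtt e,\mathtt f,\mathtt h$ and odd generators $\mathtt p,\mathtt q$, subject to $[\mathtt h,\mathtt e]=2\mathtt e$, $[\mathtt h,\mathtt f]=-2\mathtt f$, $[\mathtt e,\mathtt f]=\mathtt h$, $[\mathtt h,\mathtt p]=\mathtt p$, $[\mathtt h,\mathtt q]=-\mathtt q$, $\mathtt p^2=\mathtt e$, $\mathtt q^2=-\mathtt f$, $\mathtt p\mathtt q+\mathtt q\mathtt p=\mathtt h$, and let $\Sigma:=\mathtt p\mathtt q-\mathtt q\mathtt p+\frac12\in U(\mathfrak s)$. Let $\Bbbk=\mathbb{C}(\mathtt h)$, let $\sigma_1$ be the automorphism of $\Bbbk$ which is the identity on $\mathbb C$ and sends $\mathtt h\mapsto \mathtt h-1$, and let $R_1:=\Bbbk[x,x^{-1},\sigma_1]$ be the skew Laurent polynomial algebra (basis $x^i$, $i\in\mathbb Z$, with $x^ix^j=x^{i+j}$ and $xr=\sigma_1(r)x$ for $r\in\Bbbk$). For $u\in\Bbbk^\times$, let $N_u$ be the $R_1$-module structure on $\Bbbk$ given by $x\cdot b=\sigma_1(b)u$. For $\lambda\in\mathbb C$, let $M_{u,\lambda}:=N_u\oplus N_u$ (even $\oplus$ odd) with \[ \mathtt h\mapsto \mathtt h\,I_2,\qquad \mathtt p\mapsto \begin{pmatrix}0&x\\ x&0\end{pmatrix},\qquad \mathtt q\mapsto \begin{pmatrix}0&\frac{\mathtt h-\lambda}{2}\,x^{-1}\\[2pt] \frac{\mathtt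 h+\lambda+1}{2}\,x^{-1}&0\end{pmatrix}. \] Then: (a) This assignment defines on $M_{u,\lambda}$ the structure of a $\mathbb{Z}_2$-graded $U(\mathfrak s)$-module. (b) The element $\Sigma$ acts on $M_{u,\lambda}$ as $(\lambda+\frac12)\mathrm{diag}(1,-1)$; in particular, $\Sigma^2$ acts as $(\lambda+\tfrac12)^2\cdot\mathrm{Id}_{M_{u,\lambda}}$. (c) For the $\mathfrak{sl}_2$-Casimir $\mathtt c:=(\mathtt h+1)^2+4\mathtt f\mathtt e=(\mathtt h-1)^2+4\mathtt e\mathtt f$ (with $\mathtt e=\mathtt p^2$ and $\mathtt f=-\mathtt q^2$) one has \[ \mathtt c|_{(M_{u,\lambda})_{\bar0}}=(\lambda+1)^2,\qquad \mathtt c|_{(M_{u,\lambda})_{\bar1}}=\lambda^2 . \]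
   Context: Work over $\mathbb C$. The Lie superalgebra $\mathfrak s=\mathfrak{osp}(1|2)$, the SCasimir element $\Sigma$, the field $\Bbbk=\mathbb C(\mathtt h)$ (considered purely even), the automorphism $\sigma_1(\mathtt h)=\mathtt h-1$, the skew Laurent polynomial algebra $R_1$, and the modules $N_u$, $M_{u,\lambda}$ are as defined in the claim. *)

(* Defs.v *)
From mathcomp Require Import all_boot all_algebra.
From mathcomp Require Import complex reals.
Set Implicit Arguments. Unset Strict Implicit. Unset Printing Implicit Defensive.
Import GRing.Theory.
Local Open Scope ring_scope.
Local Open Scope quotient_scope.

Section Defs.
Variable R : realType.
Local Notation C := (R[i]).

Definition kk : fieldType := {fraction {poly C}}.
Definition cst (c : C) : kk := FracField.tofrac (c%:P).
Definition hh : kk := FracField.tofrac ('X : {poly C}).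

(* the C-automorphism of k sending h to h + t (well defined on fractions:
   substitute h -> h + t in numerator and denominator of a representative) *)
Definition shift (t : C) (b : kk) : kk :=
  let r := repr (b : {fraction {poly C}}) in
  FracField.tofrac (\n_r \Po ('X + t%:P)) / FracField.tofrac (\d_r \Po ('X + t%:P)).

Definition sigma1 : kk -> kk := shift (-1).
Definition sigma1inv : kk -> kk := shift 1.

(* the R_1-module N_u: x . b = sigma_1(b) u, hence x^{-1} . b = sigma_1^{-1}(b u^{-1}) *)
Definition x_act (u : kk) (b : kk) : kk := sigma1 b * u.
Definition xinv_act (u : kk) (b : kk) : kk := sigma1inv (b / u).

(* M_{u,lam} = N_u (+) N_u : first component even, second odd *)
Definition Mod : Type := (kk * kk)%type.

Definition csc (c : C) (v : kk * kk) : kk * kk := (cst c * v.1, cst c * v.2).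

Definition Clinear (A : kk * kk -> kk * kk) : Prop :=
  forall (c : C) (v w : kk * kk), A (csc c v + w) = csc c (A v) + A w.

Definition even_op (A : kk * kk -> kk * kk) : Prop :=
  forall b : kk, (A (b, 0)).2 = 0 /\ (A (0, b)).1 = 0.
Definition odd_op (A : kk * kk -> kk * kk) : Prop :=
  forall b : kk, (A (b, 0)).1 = 0 /\ (A (0, b)).2 = 0.

Definition hM (v : kk * kk) : kk * kk := (hh * v.1, hh * v.2).
Definition pM (u : kk) (v : kk * kk) : kk * kk := (x_act u v.2, x_act u v.1).
Definition qM (u : kk) (lam : C) (v : kk * kk) : kk * kk :=
  ((hh - cst lam) / 2%:R * xinv_act u v.2,
   (hh + cst lam + 1) / 2%:R * xinv_act u v.1).

Definition eM (u : kk) (v : kk * kk) : kk * kk := pM u (pM u v).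
Definition fM (u : kk) (lam : C) (v : kk * kk) : kk * kk := - qM u lam (qM u lam v).

Definition SigmaM (u : kk) (lam : C) (v : kk * kk) : kk * kk :=
  pM u (qM u lam v) - qM u lam (pM u v) + csc (1 / 2%:R) v.

Definition casM1 (u : kk) (lam : C) (v : kk * kk) : kk * kk :=
  hM (hM v) + hM v *+ 2 + v + fM u lam (eM u v) *+ 4.
Definition casM2 (u : kk) (lam : C) (v : kk * kk) : kk * kk :=
  hM (hM v) - hM v *+ 2 + v + eM u (fM u lam v) *+ 4.

End Defs.

(* Main.v *)
From HB Require Import structures.
Require Import Defs.
From mathcomp Require Import all_boot all_algebra.
From mathcomp Require Import complex reals.
From mathcomp Require Import ring.
Import GRing.Theory.
Local Open Scope ring_scope.
Section G.
Variables (K F : fieldType) (cs : {rmorphism K -> F}) (s t : {rmorphism F -> F}).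
Variables (h : F) (u : F) (lam : K).
Hypothesis st : forall b, s (t b) = b.
Hypothesis ts : forall b, t (s b) = b.
Hypothesis sh : s h = h - 1.
Hypothesis th : t h = h + 1.
Hypothesis scs : forall c, s (cs c) = cs c.
Hypothesis tcs : forall c, t (cs c) = cs c.
Hypothesis u0 : u != 0.
Hypothesis two0 : (2%:R : K) != 0.

Let two0F : (2%:R : F) != 0.
Proof. by rewrite -(rmorph_nat cs) fmorph_eq0. Qed.

Definition cscG (c : K) (v : F * F) : F * F := (cs c * v.1, cs c * v.2).
Definition ClinG (A : F * F -> F * F) : Prop :=
  forall (c : K) (v w : F * F), A (cscG c v + w) = cscG c (A v) + A w.
Definition hG (v : F * F) : F * F := (h * v.1, h * v.2).
Definition pG (v : F * F) : F * F := (s v.2 * u, s v.1 * u).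
Definition qG (v : F * F) : F * F :=
  ((h - cs lam) / 2%:R * t (v.2 / u), (h + cs lam + 1) / 2%:R * t (v.1 / u)).
Definition eG v := pG (pG v).
Definition fG v := - qG (qG v).
Definition SigG v := pG (qG v) - qG (pG v) + cscG (1 / 2%:R) v.

Lemma pairD (a b c d : F) : (a, b) + (c, d) = (a + c, b + d). Proof. by []. Qed.
Lemma pairN (a b : F) : - (a, b) = (- a, - b). Proof. by []. Qed.
Lemma pairMn (a b : F) n : (a, b) *+ n = (a *+ n, b *+ n).
Proof. by elim: n => // n IH; rewrite !mulrS IH. Qed.

Ltac fin := congr pair; field; rewrite ?fmorph_eq0 ?u0 ?two0F //.
Ltac pr := rewrite ?(pairD, pairN, pairMn) /=.
Ltac push := rewrite ?(rmorph_nat, rmorphD, rmorphB, rmorphN, rmorphM, fmorphV, rmorph1, rmorph0, rmorph_nat, st, ts, sh, th, scs, tcs).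

Lemma sigG v : SigG v = cscG (lam + 1 / 2%:R) (v.1, - v.2).
Proof.
case: v => a b; rewrite /SigG /pG /qG /cscG /=.
pr; push; fin.
Qed.

Definition evenG (A : F * F -> F * F) : Prop :=
  forall b : F, (A (b, 0)).2 = 0 /\ (A (0, b)).1 = 0.
Definition oddG (A : F * F -> F * F) : Prop :=
  forall b : F, (A (b, 0)).1 = 0 /\ (A (0, b)).2 = 0.
Definition cas1G v := hG (hG v) + hG v *+ 2 + v + fG (eG v) *+ 4.
Definition cas2G v := hG (hG v) - hG v *+ 2 + v + eG (fG v) *+ 4.

Ltac un := rewrite /cas1G /cas2G /SigG /eG /fG /hG /pG /qG /cscG /=.
Ltac go := do 3 (pr; push); fin.

Lemma clinh : ClinG hG. Proof. move=> c [a b] [a' b']; un; go. Qed.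
Lemma clinp : ClinG pG. Proof. move=> c [a b] [a' b']; un; go. Qed.
Lemma clinq : ClinG qG. Proof. move=> c [a b] [a' b']; un; go. Qed.
Lemma evh : evenG hG. Proof. by move=> b; un; rewrite !mulr0. Qed.
Lemma odp : oddG pG. Proof. by move=> b; un; rewrite !rmorph0 !mul0r. Qed.
Lemma odq : oddG qG. Proof. by move=> b; un; rewrite !mul0r !rmorph0 !mulr0. Qed.
Lemma r1 v : hG (eG v) - eG (hG v) = eG v *+ 2. Proof. case: v => a b; un; go. Qed.
Lemma r2 v : hG (fG v) - fG (hG v) = - (fG v *+ 2). Proof. case: v => a b; un; go. Qed.
Lemma r3 v : eG (fG v) - fG (eG v) = hG v. Proof. case: v => a b; un; go. Qed.
Lemma r4 v : hG (pG v) - pG (hG v) = pG v. Proof. case: v => a b; un; go. Qed.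
Lemma r5 v : hG (qG v) - qG (hG v) = - qG v. Proof. case: v => a b; un; go. Qed.
Lemma r6 v : pG (qG v) + qG (pG v) = hG v. Proof. case: v => a b; un; go. Qed.
Lemma sig2 v : SigG (SigG v) = cscG ((lam + 1 / 2%:R) ^+ 2) v.
Proof. rewrite sigG sigG; case: v => a b; un; go. Qed.
Lemma cas b :
     cas1G (b, 0) = cscG ((lam + 1) ^+ 2) (b, 0) /\
     cas2G (b, 0) = cscG ((lam + 1) ^+ 2) (b, 0) /\
     cas1G (0, b) = cscG (lam ^+ 2) (0, b) /\
     cas2G (0, b) = cscG (lam ^+ 2) (0, b).
Proof. by split; [|split; [|split]]; un; go. Qed.

Lemma genmain :
  ((ClinG hG /\ ClinG pG /\ ClinG qG) /\
   (evenG hG /\ oddG pG /\ oddG qG) /\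
   (forall v, hG (eG v) - eG (hG v) = eG v *+ 2) /\
   (forall v, hG (fG v) - fG (hG v) = - (fG v *+ 2)) /\
   (forall v, eG (fG v) - fG (eG v) = hG v) /\
   (forall v, hG (pG v) - pG (hG v) = pG v) /\
   (forall v, hG (qG v) - qG (hG v) = - qG v) /\
   (forall v, pG (qG v) + qG (pG v) = hG v)) /\
  (forall v, SigG v = cscG (lam + 1 / 2%:R) (v.1, - v.2)) /\
  (forall v, SigG (SigG v) = cscG ((lam + 1 / 2%:R) ^+ 2) v) /\
  (forall b : F,
     cas1G (b, 0) = cscG ((lam + 1) ^+ 2) (b, 0) /\
     cas2G (b, 0) = cscG ((lam + 1) ^+ 2) (b, 0) /\
     cas1G (0, b) = cscG (lam ^+ 2) (0, b) /\
     cas2G (0, b) = cscG (lam ^+ 2) (0, b)).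
Proof.
split; last split; [|exact: sigG|split; [exact: sig2|exact: cas]].
split; first by split; [exact: clinh|split; [exact: clinp|exact: clinq]].
split; first by split; [exact: evh|split; [exact: odp|exact: odq]].
by split; [exact: r1|split; [exact: r2|split; [exact: r3|split; [exact: r4|split; [exact: r5|exact: r6]]]]].
Qed.
End G.

Local Open Scope quotient_scope.

Lemma frac_repr (K : idomainType) (b : {fraction K}) :
  b = FracField.tofrac (\n_(repr b)) / FracField.tofrac (\d_(repr b)).
Proof.
have dn := denom_ratioP (repr b).
apply: (canRL (mulfK _)); first by rewrite tofrac_eq0.
rewrite -{1}[b]reprK; set r := repr b.
unlock FracField.tofrac.
rewrite -[LHS]FracField.pi_mul.
apply/eqmodP; rewrite /= FracField.equivfE /FracField.mulf /=.
rewrite !numden_Ratio ?oner_neq0 // ?mulf_neq0 ?oner_neq0 //.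
by rewrite !mulr1 mulrC.
Qed.

Arguments frac_repr {K}.
Lemma fsubE (F : fieldType) (x y z w : F) : y != 0 -> w != 0 ->
  x / y - z / w = (x * w - z * y) / (y * w).
Proof. by move=> y0 w0; field; rewrite y0 w0. Qed.
Lemma fmulE (F : fieldType) (x y z w : F) :
  x / y * (z / w) = (x * z) / (y * w).
Proof. by rewrite invfM; ring. Qed.

Section S.
Variable R : realType.
Local Notation C := (R[i]).
Local Notation tf := (@FracField.tofrac {poly C}).

Lemma sizeXt (t : C) : size ('X + t%:P) = 2%N.
Proof. by rewrite size_XaddC. Qed.

Lemma comp_neq0 (t : C) (d : {poly C}) : d != 0 -> d \Po ('X + t%:P) != 0.
Proof. by rewrite comp_poly_eq0 // sizeXt. Qed.

Lemma frac_eq (a b c d : {poly C}) : b != 0 -> d != 0 ->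
  a * d = c * b -> tf a / tf b = tf c / tf d :> kk R.
Proof.
move=> b0 d0 e.
have b0' : tf b != 0 by rewrite tofrac_eq0.
have d0' : tf d != 0 by rewrite tofrac_eq0.
apply: (canLR (mulfK b0')); rewrite mulrAC; apply: (canRL (mulfK d0')).
by rewrite -!rmorphM /= e.
Qed.

Lemma shift_frac (t : C) (n d : {poly C}) : d != 0 ->
  shift t (tf n / tf d) = tf (n \Po ('X + t%:P)) / tf (d \Po ('X + t%:P)).
Proof.
move=> d0; rewrite /shift.
set b := tf n / tf d.
have e := frac_repr b.
have dr := denom_ratioP (repr b).
apply: frac_eq; try by rewrite comp_poly_eq0 ?size_XaddC.
have d0' : tf d != 0 by rewrite tofrac_eq0.
have dr' : tf (\d_(repr b)) != 0 by rewrite tofrac_eq0.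
have E : \n_(repr b) * d = n * \d_(repr b).
  apply/eqP; rewrite -tofrac_eq !tofracM -eqr_div; [ | exact: dr' | exact: d0'].
  by rewrite -e /b eqxx.
by rewrite -!comp_polyM E.
Qed.

Lemma shift_tf (t : C) p : shift t (tf p) = tf (p \Po ('X + t%:P)).
Proof.
have := @shift_frac t p 1 (oner_neq0 _).
rewrite tofrac1 divr1 comp_polyC tofrac1 divr1.
exact.
Qed.

Lemma frac_ratio (b : kk R) : exists n d, d != 0 /\ b = tf n / tf d.
Proof.
exists (\n_(repr b)), (\d_(repr b)); split; first exact: denom_ratioP.
exact: frac_repr.
Qed.

Lemma shiftD (t : C) : zmod_morphism (@shift R t).
Proof.
move=> a b.
have [na [da [a0 ->]]] := frac_ratio a.
have [nb [db [b0 ->]]] := frac_ratio b.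
have a0' : tf da != 0 by rewrite tofrac_eq0.
have b0' : tf db != 0 by rewrite tofrac_eq0.
have -> : tf na / tf da - tf nb / tf db = tf (na * db - nb * da) / tf (da * db) :> kk R.
  rewrite fsubE; [|exact: a0'|exact: b0']. rewrite rmorphB !rmorphM. reflexivity.
have a1 : da \Po ('X + t%:P) != 0 by rewrite comp_poly_eq0 ?size_XaddC.
have b1 : db \Po ('X + t%:P) != 0 by rewrite comp_poly_eq0 ?size_XaddC.
have a1' : tf (da \Po ('X + t%:P)) != 0 by rewrite tofrac_eq0.
have b1' : tf (db \Po ('X + t%:P)) != 0 by rewrite tofrac_eq0.
rewrite !shift_frac; [ | exact: b0 | exact: a0 | by rewrite mulf_neq0].
rewrite fsubE; [|exact: a1'|exact: b1']. rewrite comp_polyB !comp_polyM rmorphB !rmorphM. reflexivity.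
Qed.

Lemma shiftM (t : C) : monoid_morphism (@shift R t).
Proof.
split.
  have := shift_tf t 1; rewrite comp_polyC tofrac1; exact.
move=> a b.
have [na [da [a0 ->]]] := frac_ratio a.
have [nb [db [b0 ->]]] := frac_ratio b.
have -> : tf na / tf da * (tf nb / tf db) = tf (na * nb) / tf (da * db) :> kk R.
  rewrite fmulE !rmorphM. reflexivity.
rewrite !shift_frac; [ | exact: b0 | exact: a0 | by rewrite mulf_neq0].
rewrite fmulE !comp_polyM !rmorphM. reflexivity.
Qed.


HB.instance Definition _ (t : C) :=
  GRing.isZmodMorphism.Build (kk R) (kk R) (@shift R t) (shiftD t).
HB.instance Definition _ (t : C) :=
  GRing.isMonoidMorphism.Build (kk R) (kk R) (@shift R t) (shiftM t).

Lemma shift_shift (s t : C) b : shift s (shift t b) = shift (s + t) b.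
Proof.
have [n [d [d0 ->]]] := frac_ratio b.
have d1 : d \Po ('X + t%:P) != 0 by rewrite comp_poly_eq0 ?size_XaddC.
rewrite shift_frac; [|exact: d0].
rewrite shift_frac; [|exact: d1].
rewrite shift_frac; [|exact: d0].
rewrite -!comp_polyA comp_polyD comp_polyX comp_polyC polyCD addrA.
reflexivity.
Qed.

Lemma shift0 b : @shift R 0 b = b.
Proof.
have [n [d [d0 ->]]] := frac_ratio b.
rewrite shift_frac; [|exact: d0].
rewrite addr0 !comp_polyXr. reflexivity.
Qed.

Lemma shift_cst (t c : C) : shift t (cst c) = cst c.
Proof. rewrite /cst shift_tf comp_polyC. reflexivity. Qed.

Lemma shift_hh (t : C) : shift t (hh R) = hh R + cst t.
Proof. rewrite /hh /cst shift_tf comp_polyX rmorphD. reflexivity. Qed.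

Lemma cstD : zmod_morphism (@cst R).
Proof. move=> a b; rewrite /cst polyCB rmorphB. reflexivity. Qed.
Lemma cstM : monoid_morphism (@cst R).
Proof.
split; first by rewrite /cst tofrac1.
move=> a b; rewrite /cst polyCM rmorphM. reflexivity.
Qed.
HB.instance Definition _ := GRing.isZmodMorphism.Build C (kk R) (@cst R) cstD.
HB.instance Definition _ := GRing.isMonoidMorphism.Build C (kk R) (@cst R) cstM.

Lemma s1_s1inv b : sigma1 (sigma1inv b) = b :> kk R.
Proof. rewrite /sigma1 /sigma1inv shift_shift addNr shift0. reflexivity. Qed.
Lemma s1inv_s1 b : sigma1inv (sigma1 b) = b :> kk R.
Proof. rewrite /sigma1 /sigma1inv shift_shift addrN shift0. reflexivity. Qed.

End S.

Theorem lemma21 (R : realType) (u : kk R) (lam : R[i]) :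
  u != 0 ->
  let h := @hM R in
  let p := pM u in
  let q := qM u lam in
  let e := eM u in
  let f := fM u lam in
  ((Clinear h /\ Clinear p /\ Clinear q) /\
   (even_op h /\ odd_op p /\ odd_op q) /\
   (forall v, h (e v) - e (h v) = e v *+ 2) /\
   (forall v, h (f v) - f (h v) = - (f v *+ 2)) /\
   (forall v, e (f v) - f (e v) = h v) /\
   (forall v, h (p v) - p (h v) = p v) /\
   (forall v, h (q v) - q (h v) = - q v) /\
   (forall v, p (q v) + q (p v) = h v)) /\
  (forall v : kk R * kk R,
     SigmaM u lam v = csc (lam + 1 / 2%:R) (v.1, - v.2)) /\
  (forall v : kk R * kk R,
     SigmaM u lam (SigmaM u lam v) = csc ((lam + 1 / 2%:R) ^+ 2) v) /\
  (forall b : kk R,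
     casM1 u lam (b, 0) = csc ((lam + 1) ^+ 2) (b, 0) /\
     casM2 u lam (b, 0) = csc ((lam + 1) ^+ 2) (b, 0) /\
     casM1 u lam (0, b) = csc (lam ^+ 2) (0, b) /\
     casM2 u lam (0, b) = csc (lam ^+ 2) (0, b)).
Proof.
move=> u0 h p q e f.
have sh : sigma1 (hh R) = hh R - 1.
  rewrite /sigma1 shift_hh rmorphN rmorph1. reflexivity.
have th : sigma1inv (hh R) = hh R + 1.
  rewrite /sigma1inv shift_hh rmorph1. reflexivity.
have two0 : (2%:R : R[i]) != 0 by rewrite Num.Theory.pnatr_eq0.
exact: (@genmain (R[i]) (kk R) (@cst R) (@shift R (-1)) (@shift R 1) (hh R) u lam
  (@s1_s1inv R) (@s1inv_s1 R) sh th (@shift_cst R (-1)) (@shift_cst R 1) u0 two0).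
Qed.
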